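(* Let $0<\eta<\frac1{2L}$ and let $\{(X^k,X_0^k;Y^k,Z^k)\}_{k\ge0}$ be generated by ADAPD (defined in the context). Then for all $k\ge0$, $$\mathcal L_\eta(X^{k+1},X_0^k;Y^k,Z^k)-\mathcal L_\eta(X^k,X_0^k;Y^k,Z^k)\le\frac{2L\eta-1}{2\eta}\|X^{k+1}-X^k\|_F^2+\frac{\epsilon_{k+1}}{2L}.$$
   Context: Notation: $\langle A,B\rangle=\sum_{i,j}a_{ij}b_{ij}$, $\|\cdot\|_F$ Frobenius norm, $e\in\mathbb R^N$ all-ones vector. Mixing matrix $W\in\mathbb R^{N\times N}$ of an undirected graph $\mathcal G=(\{1,\dots,N\},\mathcal E)$ with (i) $w_{ij}>0$ if $(i,j)\in\mathcal E$, $w_{ij}=0$ otherwise; (ii) $W=W^\top$; (iii) $\mathrm{null}(I-W)=\mathrm{span}\{e\}$; (iv) $-1<\lambda_N(W)\le\dots\le\lambda_2(W)<\lambda_1(W)=1$. $\sqrt{I-W}$ is the PSD square root of $I-W$. $f_i:\mathbb R^p\to\mathbb R$ differentiable; $F(X)=\frac1N\sum_if_i(x_i)$ for $X$ with rows $x_i^\top$, gradient $\nabla F(X)$ with rows $\frac1N\nabla f_i(x_i)^\top$; $\|\nabla F(X)-\nabla F(X')\|_F\le L\|X-X'\|_F$ for all $X,X'$, $0<L<\infty$. Augmented Lagrangian: $\mathcal L_\eta(X,X_0;Y,Z)=F(X)+\langle Y,X-X_0\rangle+\frac1{2\eta}\|X-X_0\|_F^2+\langle Z,\sqrt{I-W}X_0\rangle+\frac1{2\eta}\|\sqrt{I-W}X_0\|_F^2$.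 ADAPD: fix $\eta>0$ and non-increasing nonnegative $(\epsilon_k)_{k\ge1}$; arbitrary $X^0,X_0^0,Y^0$, $Z^0\in\mathrm{range}(\sqrt{I-W})$. For $k\ge0$: $X^{k+1}$ is any matrix such that each row $r_i^{k+1}$ of $R^{k+1}=\nabla F(X^{k+1})+Y^k+\frac1\eta(X^{k+1}-X_0^k)$ satisfies $\|r_i^{k+1}\|_2^2\le\epsilon_{k+1}/N$; $X_0^{k+1}=\frac12(WX_0^k+X^{k+1}+\eta(Y^k-\sqrt{I-W}Z^k))$, $Y^{k+1}=Y^k+\frac1\eta(X^{k+1}-X_0^{k+1})$, $Z^{k+1}=Z^k+\frac1\eta\sqrt{I-W}X_0^{k+1}$. *)

(* Defs.v *)
From HB Require Import structures.
From mathcomp Require Import all_boot all_order all_algebra.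
From mathcomp Require Import all_classical all_reals all_analysis.
Set Implicit Arguments. Unset Strict Implicit. Unset Printing Implicit Defensive.
Import Order.TTheory GRing.Theory Num.Theory.
Import numFieldNormedType.Exports.
Local Open Scope ring_scope.

Definition frob_inner (R : realType) (m n : nat) (A B : 'M[R]_(m, n)) : R :=
  \sum_(i < m) \sum_(j < n) A i j * B i j.

Definition frob2 (R : realType) (m n : nat) (A : 'M[R]_(m, n)) : R :=
  frob_inner A A.

Definition frob (R : realType) (m n : nat) (A : 'M[R]_(m, n)) : R :=
  Num.sqrt (frob2 A).

Definition grad (R : realType) (p : nat) (g : 'rV[R]_p -> R) (x : 'rV[R]_p)
  : 'rV[R]_p := \row_(j < p) ('d g x (delta_mx 0 j : 'rV[R]_p)).

Definition Fsum (R : realType) (N p : nat) (f : 'I_N -> 'rV[R]_p -> R)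
  (X : 'M[R]_(N, p)) : R :=
  N%:R^-1 * \sum_(i < N) f i (row i X).

Definition gradF (R : realType) (N p : nat) (f : 'I_N -> 'rV[R]_p -> R)
  (X : 'M[R]_(N, p)) : 'M[R]_(N, p) :=
  \matrix_(i < N, j < p) (N%:R^-1 * grad (f i) (row i X) 0 j).

Definition is_psd_sqrt (R : realType) (N : nat) (S A : 'M[R]_N) : Prop :=
  S^T = S /\ (forall v : 'cV[R]_N, 0 <= (v^T *m S *m v) 0 0) /\ S *m S = A.

Definition mixing_matrix (R : realType) (N : nat) (e : rel 'I_N)
  (W : 'M[R]_N) : Prop :=
  (forall i j, e i j -> 0 < W i j) /\ (forall i j, ~~ e i j -> W i j = 0) /\
  W^T = W /\
  (forall v : 'cV[R]_N,
      (1%:M - W) *m v = 0 <-> exists c : R, v = c *: const_mx 1) /\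
  (* -1 < lambda_N <= ... <= lambda_2 < lambda_1 = 1 *)
  eigenvalue W 1 /\ \rank (eigenspace W 1) = 1%N /\
  (forall a : R, eigenvalue W a -> -1 < a <= 1).

(* Augmented Lagrangian; S plays the role of sqrt(I - W) *)
Definition AL (R : realType) (N p : nat) (f : 'I_N -> 'rV[R]_p -> R)
  (S : 'M[R]_N) (eta : R) (X X0 Y Z : 'M[R]_(N, p)) : R :=
  Fsum f X + frob_inner Y (X - X0) + (2 * eta)^-1 * frob2 (X - X0)
  + frob_inner Z (S *m X0) + (2 * eta)^-1 * frob2 (S *m X0).

(* Main.v *)
Require Import Defs.
From HB Require Import structures.
From mathcomp Require Import all_boot all_order all_algebra.
From mathcomp Require Import all_classical all_reals all_analysis.
From mathcomp Require Import ring lra.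
Import Order.TTheory GRing.Theory Num.Theory.
Import numFieldNormedType.Exports.
Local Open Scope ring_scope.



Section Alg.
Variable R : realType.
Variables m n : nat.
Implicit Types A B C : 'M[R]_(m, n).

Lemma fi_sym A B : frob_inner A B = frob_inner B A.
Proof. by apply: eq_bigr => i _; apply: eq_bigr => j _; rewrite mulrC. Qed.

Lemma fiDl A B C : frob_inner (A + B) C = frob_inner A C + frob_inner B C.
Proof.
rewrite /frob_inner -big_split; apply: eq_bigr => i _.
rewrite -big_split; apply: eq_bigr => j _; by rewrite !mxE mulrDl.
Qed.

Lemma fiZl a A B : frob_inner (a *: A) B = a * frob_inner A B.
Proof.
rewrite /frob_inner mulr_sumr; apply: eq_bigr => i _.
rewrite mulr_sumr; apply: eq_bigr => j _; by rewrite !mxE mulrA.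
Qed.

Lemma fiNl A B : frob_inner (- A) B = - frob_inner A B.
Proof. by rewrite -scaleN1r fiZl mulN1r. Qed.

Lemma fiBl A B C : frob_inner (A - B) C = frob_inner A C - frob_inner B C.
Proof. by rewrite fiDl fiNl. Qed.

Lemma fiDr A B C : frob_inner C (A + B) = frob_inner C A + frob_inner C B.
Proof. by rewrite fi_sym fiDl !(fi_sym C). Qed.

Lemma fiZr a A B : frob_inner B (a *: A) = a * frob_inner B A.
Proof. by rewrite fi_sym fiZl fi_sym. Qed.

Lemma fiNr A B : frob_inner B (- A) = - frob_inner B A.
Proof. by rewrite fi_sym fiNl fi_sym. Qed.

Lemma fiBr A B C : frob_inner C (A - B) = frob_inner C A - frob_inner C B.
Proof. by rewrite fiDr fiNr. Qed.

Lemma frob2_ge0 A : 0 <= frob2 A.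
Proof.
by apply: sumr_ge0 => i _; apply: sumr_ge0 => j _; rewrite -expr2 sqr_ge0.
Qed.

Lemma young_fi A B c : 0 < c ->
  frob_inner A B <= frob2 A / (2 * c) + c / 2 * frob2 B.
Proof.
move=> c0; rewrite /frob2 /frob_inner mulr_suml mulr_sumr -big_split /=.
apply: ler_sum => i _; rewrite mulr_suml mulr_sumr -big_split /=.
apply: ler_sum => j _.
set a := A i j; set b := B i j.
have h : 0 <= (a - c * b) ^+ 2 by apply: sqr_ge0.
have e : a * a / (2 * c) + c / 2 * (b * b) - a * b = (a - c * b) ^+ 2 / (2 * c).
  by field; rewrite gt_eqF.
rewrite -subr_ge0 e; apply: divr_ge0 => //; lra.
Qed.

Lemma frob2_sq A : frob A ^+ 2 = frob2 A.
Proof. by rewrite /frob sqr_sqrtr // frob2_ge0. Qed.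

Lemma frob2Z a A : frob2 (a *: A) = a ^+ 2 * frob2 A.
Proof. by rewrite /frob2 fiZl fiZr mulrA expr2. Qed.

Lemma frob2D A B : frob2 (A + B) = frob2 A + 2 * frob_inner A B + frob2 B.
Proof. rewrite /frob2 fiDl !fiDr (fi_sym B A); ring. Qed.

Lemma frob2N A : frob2 (- A) = frob2 A.
Proof. by rewrite /frob2 fiNl fiNr opprK. Qed.

End Alg.



Section D.
Variable R : realType.
Lemma dgrad p (g : 'rV[R]_p -> R) x v :
  'd g x v = \sum_(j < p) grad g x 0 j * v 0 j.
Proof.
rewrite {1}(matrix_sum_delta v) big_ord1 linear_sum; apply: eq_bigr => j _.
by rewrite linearZ /grad mxE /= mulrC.
Qed.
Lemma deriv_line p (g : 'rV[R]_p -> R) a v t :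
  differentiable g (a + t *: v) ->
  is_derive t 1 (fun s : R => g (a + s *: v)) ('d g (a + t *: v) v).
Proof.
move=> dg.
pose h : R -> 'rV[R]_p := fun s => a + s *: v.
have hi := @is_diffD R R _ (cst a) ( *:%R^~ v) 0 ( *:%R^~ v) t
   (is_diff_cst a t) (is_diff_scalel t v).
have eh : cst a + ( *:%R^~ v) = h by apply/funext.
rewrite eh in hi.
have dh : differentiable h t by exact: (@ex_diff _ _ _ _ _ _ _ hi).
have dhv : 'd h t 1 = v.
  by rewrite (@diff_val _ _ _ _ _ _ _ hi) /= add0r scale1r.
have e : (fun s : R => g (a + s *: v)) = g \o h by apply/funext.
rewrite e.
have dc : differentiable (g \o h) t by apply: differentiable_comp.
apply: DeriveDef; first exact: diff_derivable.
by rewrite deriveE // diff_comp //= dhv.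
Qed.
End D.



Section D.
Variable R : realType.

Lemma row_line N p (X D : 'M[R]_(N, p)) i s :
  row i (X + s *: D) = row i X + s *: row i D.
Proof. by apply/rowP => j; rewrite !mxE. Qed.

Lemma derivF N p (f : 'I_N -> 'rV[R]_p -> R) (X1 D : 'M[R]_(N, p)) (t : R) :
  (forall i x, differentiable (f i) x) ->
  is_derive t (1:R) (fun s : R => Fsum f (X1 + s *: D))
     (frob_inner (gradF f (X1 + t *: D)) D).
Proof.
move=> df.
have e : (fun s : R => Fsum f (X1 + s *: D)) =
   N%:R^-1 \*: (\sum_(i < N) (fun s : R => f i (row i X1 + s *: row i D))).
  apply/funext => s /=; rewrite /Fsum fct_sumE /=.
  by congr (_ * _); apply: eq_bigr => i _; rewrite row_line.
rewrite e.
apply: is_derive_eq.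
  apply: is_deriveZ.
  apply: (@is_derive_sum _ _ _ _ _ _ _ (fun i => 'd (f i) (row i X1 + t *: row i D) (row i D))) => i.
  by apply: deriv_line; apply: df.
rewrite /frob_inner /= scaler_sumr; apply: eq_bigr => i _.
rewrite dgrad scaler_sumr; apply: eq_bigr => j _.
rewrite !mxE row_line. rewrite -mulrA. done.
Qed.
End D.



Section C.
Variable R : realType.

Lemma frob_ge0 m n (A : 'M[R]_(m, n)) : 0 <= frob A.
Proof. exact: sqrtr_ge0. Qed.

Lemma lip_lower m n (G D : 'M[R]_(m, n)) (L c : R) : 0 < L -> 0 < c ->
  frob G <= L * frob (c *: D) -> - (L * c * frob2 D) <= frob_inner G D.
Proof.
move=> L0 c0 hG.
have h2 : frob2 G <= (L * c) ^+ 2 * frob2 D.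
  rewrite -frob2_sq -[frob2 D]frob2_sq.
  have -> : (L * c) ^+ 2 * frob D ^+ 2 = (L * frob (c *: D)) ^+ 2.
    by rewrite !exprMn !frob2_sq frob2Z; ring.
  rewrite !expr2; apply: ler_pM => //; exact: frob_ge0.
have y := @young_fi R _ _ (- G) D (L * c) (mulr_gt0 L0 c0).
rewrite fiNl frob2N in y.
have hD := @frob2_ge0 R _ _ D.
have : frob2 G / (2 * (L * c)) <= (L * c) / 2 * frob2 D.
  rewrite ler_pdivrMr; last by apply: mulr_gt0 => //; apply: mulr_gt0.
  apply: (le_trans h2); rewrite le_eqVlt; apply/orP; left; apply/eqP.
  by field.
move=> hh.
have : - frob_inner G D <= L * c * frob2 D.
  apply: (le_trans y). 
  have -> : L * c * frob2 D = L * c / 2 * frob2 D + L * c / 2 * frob2 D by field.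
  by rewrite lerD2r.
rewrite lerNl; done.
Qed.

End C.



Section De.
Variable R : realType.

Lemma descent N p (f : 'I_N -> 'rV[R]_p -> R) (L : R) (X1 D : 'M[R]_(N, p)) :
  (forall i x, differentiable (f i) x) -> 0 < L ->
  (forall U V : 'M[R]_(N, p), frob (gradF f U - gradF f V) <= L * frob (U - V)) ->
  Fsum f X1 + frob_inner (gradF f X1) D - L / 2 * frob2 D <= Fsum f (X1 + D).
Proof.
move=> df L0 lip.
set c0 := frob_inner (gradF f X1) D.
set K := L / 2 * frob2 D.
pose phi := fun s : R => Fsum f (X1 + s *: D).
pose h : R -> R := phi + ((- c0) \*: (fun s : R => s) + K \*: ((fun s : R => s) * (fun s : R => s))).
pose dh := fun t : R => frob_inner (gradF f (X1 + t *: D)) D - c0 + K * (2 * t).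
have hd : forall t, is_derive t (1:R) h (dh t).
  move=> t.
  have d1 := @derivF R _ _ f X1 D t df.
  have d2 : is_derive t (1:R) (fun s : R => s) 1 := is_derive_id t 1.
  have d3 := is_deriveM d2 d2.
  have d4 := is_deriveZ K d3.
  have d5 := is_deriveZ (- c0) d2.
  have d6 := is_deriveD d1 (is_deriveD d5 d4).
  apply: (is_derive_eq d6).
  have sE : forall x y : R, x *: y = x * y by [].
  rewrite /dh !sE; ring.
have hE : forall s, h s = Fsum f (X1 + s *: D) - s * c0 + K * (s * s).
  have sE : forall x y : R, x *: y = x * y by [].
  move=> s; transitivity (Fsum f (X1 + s *: D) + ((- c0) * s + K * (s * s))); first by []. ring.
have [c cI hc] : exists2 c, c \in `]0, 1[ & h 1 - h 0 = dh c * (1 - 0).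
  apply: MVT => //.
  apply: derivable_within_continuous => x _.
  exact: (@ex_derive _ _ _ _ _ _ _ (hd x)).
pose c' : R := c.
have cpos : 0 < c' by move: cI; rewrite in_itv /= => /andP [].
have hl2 : -(L * c' * frob2 D) <= frob_inner (gradF f (X1 + c' *: D) - gradF f X1) D.
  apply: (@lip_lower R N p _ D L c' L0 cpos).
  have := lip (X1 + c' *: D) X1.
  rewrite (_ : X1 + c' *: D - X1 = c' *: D); last by rewrite addrC addKr.
  by move=> H; exact H.
have e1 : frob_inner (gradF f (X1 + c' *: D) - gradF f X1) D =
   frob_inner (gradF f (X1 + c' *: D)) D - c0 := @fiBl R N p _ _ D.
have dE : dh c' = frob_inner (gradF f (X1 + c' *: D)) D - c0 + K * (2 * c') by [].
have hc' : h 1 - h 0 = dh c' by rewrite hc subr0 mulr1.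
rewrite !hE in hc'.
rewrite scale1r scale0r addr0 in hc'.
have KE : K = L / 2 * frob2 D by [].
have K2 : K * (2 * c') = L * c' * frob2 D by rewrite KE; field.
move: hc' dE e1 hl2 K2.
generalize (frob_inner (gradF f (X1 + c' *: D) - gradF f X1) D).
generalize (frob_inner (gradF f (X1 + c' *: D)) D).
generalize (dh c').
move=> *; lra.
Qed.
End De.



Section M.
Variable R : realType.

Lemma frob2_rows m n (A : 'M[R]_(m, n)) : frob2 A = \sum_(i < m) frob2 (row i A).
Proof.
rewrite /frob2 /frob_inner; apply: eq_bigr => i _; rewrite big_ord1.
by apply: eq_bigr => j _; rewrite !mxE.
Qed.

Lemma frob2_rows_le m n (A : 'M[R]_(m, n)) (e : R) : 0 <= e ->
  (forall i, frob2 (row i A) <= e / m%:R) -> frob2 A <= e.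
Proof.
move=> e0 h; rewrite frob2_rows.
case: m A h => [|m] A h; first by rewrite big_ord0.
apply: (le_trans (ler_sum _ (fun i _ => h i))).
rewrite sumr_const card_ord -(mulr_natr (e / _)) divfK // pnatr_eq0.
Qed.

Lemma key3 m n (X1 Xk U : 'M[R]_(m, n)) (eta : R) : eta != 0 ->
  (2 * eta)^-1 * frob2 (X1 - U) - (2 * eta)^-1 * frob2 (Xk - U) =
  eta^-1 * frob_inner (X1 - U) (X1 - Xk) - (2 * eta)^-1 * frob2 (X1 - Xk).
Proof.
move=> e0.
have e : X1 - U = (Xk - U) + (X1 - Xk) by rewrite [RHS]addrC addrA subrK.
rewrite e frob2D (@fiDl R _ _ (Xk - U)) -/(frob2 (X1 - Xk)); field.
exact: e0.
Qed.

Lemma keyY m n (X1 Xk U Y : 'M[R]_(m, n)) :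
  frob_inner Y (X1 - U) - frob_inner Y (Xk - U) = frob_inner Y (X1 - Xk).
Proof. rewrite !fiBr; ring. Qed.

Lemma keyR m n (G Y Q d : 'M[R]_(m, n)) (a : R) :
  frob_inner (G + Y + a *: Q) d = frob_inner G d + frob_inner Y d + a * frob_inner Q d.
Proof. by rewrite !fiDl fiZl. Qed.

End M.



Theorem lemma7 (R : realType) (N p : nat) (e : rel 'I_N)
  (W S : 'M[R]_N) (f : 'I_N -> 'rV[R]_p -> R) (L eta : R)
  (eps : nat -> R) (X X0 Y Z : nat -> 'M[R]_(N, p)) :
  (* graph and mixing matrix *)
  symmetric e -> mixing_matrix e W ->
  is_psd_sqrt S (1%:M - W) ->
  (* smoothness *)
  (forall i x, differentiable (f i) x) ->
  0 < L ->
  (forall U V : 'M[R]_(N, p), frob (gradF f U - gradF f V) <= L * frob (U - V)) ->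
  (* step size *)
  0 < eta -> eta < (2 * L)^-1 ->
  (* tolerances (eps_k)_{k>=1}: nonnegative, non-increasing *)
  (forall k, (1 <= k)%N -> 0 <= eps k) ->
  (forall k, (1 <= k)%N -> eps k.+1 <= eps k) ->
  (* ADAPD *)
  (exists M : 'M[R]_(N, p), Z 0%N = S *m M) ->
  (forall k (i : 'I_N),
      let Rk := gradF f (X k.+1) + Y k + eta^-1 *: (X k.+1 - X0 k) in
      frob2 (row i Rk) <= eps k.+1 / N%:R) ->
  (forall k, X0 k.+1 = 2^-1 *: (W *m X0 k + X k.+1 + eta *: (Y k - S *m Z k))) ->
  (forall k, Y k.+1 = Y k + eta^-1 *: (X k.+1 - X0 k.+1)) ->
  (forall k, Z k.+1 = Z k + eta^-1 *: (S *m X0 k.+1)) ->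
  forall k : nat,
    AL f S eta (X k.+1) (X0 k) (Y k) (Z k) - AL f S eta (X k) (X0 k) (Y k) (Z k)
    <= (2 * L * eta - 1) / (2 * eta) * frob2 (X k.+1 - X k) + eps k.+1 / (2 * L).
Proof.
move=> _ _ _ df L0 lip eta0 _ epsge0 _ _ hres _ _ _ k.
have eps0 : 0 <= eps k.+1 by apply: epsge0.
have hR : forall i, frob2 (row i (gradF f (X k.+1) + Y k + eta^-1 *: (X k.+1 - X0 k)))
   <= eps k.+1 / N%:R := fun i => hres k i.
have rb := @frob2_rows_le R _ _ _ _ eps0 hR.
have rb2 : frob2 (gradF f (X k.+1) + Y k + eta^-1 *: (X k.+1 - X0 k)) / (2 * L)
    <= eps k.+1 / (2 * L).
  by apply: ler_wpM2r => //; rewrite invr_ge0; lra.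
have yg := @young_fi R N p (gradF f (X k.+1) + Y k + eta^-1 *: (X k.+1 - X0 k))
   (X k.+1 - X k) L L0.
rewrite keyR in yg.
have desc := @descent R N p f L (X k.+1) (- (X k.+1 - X k)) df L0 lip.
rewrite fiNr frob2N (_ : X k.+1 + - (X k.+1 - X k) = X k) in desc; last first.
  by rewrite opprB addrC subrK.
have e3 := @key3 R N p (X k.+1) (X k) (X0 k) eta (lt0r_neq0 eta0).
have eY := @keyY R N p (X k.+1) (X k) (X0 k) (Y k).
have E1 : (2 * L * eta - 1) / (2 * eta) * frob2 (X k.+1 - X k) =
   L / 2 * frob2 (X k.+1 - X k) + L / 2 * frob2 (X k.+1 - X k)
   - (2 * eta)^-1 * frob2 (X k.+1 - X k).
  by field; apply: lt0r_neq0.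
rewrite /AL.
lra.
Qed.
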